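(* Let $(M,\varepsilon)$ be a local Lie group. Regarding the torsion $T$ as a section of $\Lambda^2(T^*M)\otimes TM$, one has $\widehat dT=0$.
   Context: $M$ is a smooth manifold of dimension $n\ge2$. A splitting $\varepsilon$ assigns to each $(p,q)\in M\times M$ a linear isomorphism $\varepsilon(p,q):T_pM\to T_qM$, smooth in $(p,q)$, with $\varepsilon(q,r)\circ\varepsilon(p,q)=\varepsilon(p,r)$, $\varepsilon(p,p)=\mathrm{id}$. In coordinates $\varepsilon(p,q)=(\varepsilon^i_j(x,y))$; set $\Gamma^i_{kj}(x)=[\partial\varepsilon^i_j(x,y)/\partial y^k]_{y=x}$ (summation convention). The torsion is $T^i_{jk}=\Gamma^i_{jk}-\Gamma^i_{kj}$. $(M,\varepsilon)$ is a local Lie group if the system $\partial f^i(x)/\partial x^j=\varepsilon^i_j(x,f(x))$ is completely integrable (for all $p,q$ there is a local diffeomorphism $f$ near $p$ with $f(p)=q$ and $df_x=\varepsilon(x,f(x))$); equivalently $\widehat{\mathfrak{R}}=0$, with $\widehat{\mathfrak{R}}^i_{rj,k}=\partial_r\Gamma^i_{kj}+\Gamma^a_{kr}\Gamma^i_{aj}-\partial_j\Gamma^i_{kr}-\Gamma^a_{kj}\Gamma^i_{ar}$. For a $TM$-valued $2$-form $\phi=(\phi^i_{kj})$, $(\widehat d\phi)^i_{rkj}=\widehat d_r\phi^i_{kj}-\widehat d_k\phi^i_{rj}-\widehat d_j\phi^i_{kr}$, where $\widehat d_r\phi^i_{kj}=\partial_r\phi^i_{kj}-\Gamma^i_{ar}\phi^a_{kj}$.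 *)

(* Defs.v *)
From HB Require Import structures.
From mathcomp Require Import all_boot all_order all_algebra.
From mathcomp Require Import all_classical all_reals all_analysis.
Set Implicit Arguments. Unset Strict Implicit. Unset Printing Implicit Defensive.
Import Order.TTheory GRing.Theory Num.Theory.
Import numFieldNormedType.Exports.
Local Open Scope classical_set_scope.
Local Open Scope ring_scope.

Section Defs.
Variables (R : realType) (n : nat).
Local Notation pt := 'rV[R]_n.

Definition ei (k : 'I_n) : pt := delta_mx 0 k.

Definition pd (k : 'I_n) (f : pt -> R) (x : pt) : R := derive f x (ei k).

Definition iter_pd (l : seq 'I_n) (f : pt -> R) : pt -> R :=
  foldr (fun k g => pd k g) f l.

Definition smooth_on (m : nat) (A : set 'rV[R]_m) (f : 'rV[R]_m -> R) :=
  forall (l : seq 'I_m) (x : 'rV[R]_m), A x ->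
    {for x, continuous (foldr (fun k g => fun y => derive g y (delta_mx 0 k)) f l)} /\
    forall k : 'I_m, derivable (foldr (fun k g => fun y => derive g y (delta_mx 0 k)) f l) x (delta_mx 0 k).

(* A splitting on the open coordinate domain U of R^n: eps x y is the matrix
   (eps^i_j(x,y)) of the isomorphism T_x -> T_y (acting on column vectors). *)
Definition splitting (U : set pt) (eps : pt -> pt -> 'M[R]_n) :=
  [/\ (forall i j : 'I_n,
         smooth_on [set z : 'rV[R]_(n + n) | U (lsubmx z) /\ U (rsubmx z)]
           (fun z => eps (lsubmx z) (rsubmx z) i j)),
      (forall x y, U x -> U y -> eps x y \in unitmx),
      (forall x y z, U x -> U y -> U z -> eps y z *m eps x y = eps x z) &
      (forall x, U x -> eps x x = 1%:M)].

(* Gam eps i k j x = Gamma^i_{kj}(x) = d eps^i_j(x,y)/dy^k at y = x *)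
Definition Gam (eps : pt -> pt -> 'M[R]_n) (i k j : 'I_n) (x : pt) : R :=
  pd k (fun y => eps x y i j) x.

Definition Tor (eps : pt -> pt -> 'M[R]_n) (i j k : 'I_n) (x : pt) : R :=
  Gam eps i j k x - Gam eps i k j x.

(* local Lie group: the system df^i/dx^j = eps^i_j(x, f(x)) is completely
   integrable: for all p q there is a local diffeomorphism f near p with
   f p = q and df_x = eps(x, f x). *)
Definition local_lie_group (U : set pt) (eps : pt -> pt -> 'M[R]_n) :=
  forall p q, U p -> U q ->
    exists (V : set pt) (f : pt -> pt),
      [/\ open V, V p, V `<=` U & f p = q] /\
      [/\ {in V &, injective f},
          open (f @` V),
          (forall x, V x -> U (f x) /\ differentiable f x) &
          (forall x, V x -> forall i j : 'I_n,
              pd j (fun z => f z ord0 i) x = eps x (f x) i j)].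

(* hat-d of a TM-valued 2-form phi (phi i k j x = phi^i_{kj}(x)):
   dhat_r phi^i_{kj} = d_r phi^i_{kj} - Gamma^i_{ar} phi^a_{kj} *)
Definition dhat_r (eps : pt -> pt -> 'M[R]_n)
  (phi : 'I_n -> 'I_n -> 'I_n -> pt -> R) (r i k j : 'I_n) (x : pt) : R :=
  pd r (phi i k j) x - \sum_(a < n) Gam eps i a r x * phi a k j x.

Definition dhat (eps : pt -> pt -> 'M[R]_n)
  (phi : 'I_n -> 'I_n -> 'I_n -> pt -> R) (i r k j : 'I_n) (x : pt) : R :=
  dhat_r eps phi r i k j x - dhat_r eps phi k i r j x - dhat_r eps phi j i k r x.

End Defs.

(* Main.v *)
Require Import Defs.
From HB Require Import structures.
From mathcomp Require Import all_boot all_order all_algebra.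
From mathcomp Require Import all_classical all_reals all_analysis.
From mathcomp Require Import ring lra.
Set Implicit Arguments. Unset Strict Implicit. Unset Printing Implicit Defensive.
Import Order.TTheory GRing.Theory Num.Theory.
Import numFieldNormedType.Exports.
Local Open Scope classical_set_scope.
Local Open Scope ring_scope.


Lemma line_fun (R : realType) (m : nat) (g : 'rV[R]_m -> R) (p v : 'rV[R]_m) (t : R) :
  (fun h : R => h^-1 *: (((fun s : R => g (p + s *: v)) \o shift t) (h *: 1) - g (p + t *: v)))
  = (fun h : R => h^-1 *: ((g \o shift (p + t *: v)) (h *: v) - g (p + t *: v))).
Proof.
apply: funext => h /=; congr (_ *: (g _ - _)).
by rewrite [h *: 1]mulr1 scalerDl addrA [_ + h *: v]addrC addrA.
Qed.

Lemma line_derivable (R : realType) (m : nat) (g : 'rV[R]_m -> R) (p v : 'rV[R]_m) (t : R) :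
  derivable g (p + t *: v) v -> derivable (fun s : R => g (p + s *: v)) t 1.
Proof. by rewrite /derivable line_fun. Qed.

Lemma line_derive (R : realType) (m : nat) (g : 'rV[R]_m -> R) (p v : 'rV[R]_m) (t : R) :
  derive (fun s : R => g (p + s *: v)) t 1 = derive g (p + t *: v) v.
Proof. by rewrite /derive line_fun. Qed.

Lemma line_is_derive (R : realType) (m : nat) (g : 'rV[R]_m -> R) (p v : 'rV[R]_m) (t : R) :
  derivable g (p + t *: v) v ->
  is_derive t 1 (fun s : R => g (p + s *: v)) (derive g (p + t *: v) v).
Proof. by move=> d; split; [apply: line_derivable | rewrite line_derive]. Qed.

Lemma mvt_line (R : realType) (m : nat) (g : 'rV[R]_m -> R) (p v : 'rV[R]_m) (h : R) :
  (forall t, `|t| <= `|h| -> derivable g (p + t *: v) v) ->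
  exists t, `|t| <= `|h| /\ g (p + h *: v) - g p = h * derive g (p + t *: v) v.
Proof.
move=> dg.
pose phi := fun s : R => g (p + s *: v).
pose df := fun s : R => derive g (p + s *: v) v.
have key : forall a b, a <= b -> `|a| <= `|h| -> `|b| <= `|h| ->
    exists2 c, c \in `[a, b] & phi b - phi a = df c * (b - a).
  move=> a b ab ah bh; apply: MVT_segment => //.
  - move=> t; rewrite in_itv /= => /andP[hta htb]; apply: line_is_derive; apply: dg.
    rewrite ler_norml; apply/andP; split.
    + by apply: le_trans (ltW hta); move: ah; rewrite ler_norml => /andP[].
    + by apply: le_trans (ltW htb) _; move: bh; rewrite ler_norml => /andP[].
  - apply: derivable_within_continuous => t; rewrite in_itv /= => /andP[hta htb].
    apply: line_derivable; apply: dg; rewrite ler_norml; apply/andP; split.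
    + by apply: le_trans hta; move: ah; rewrite ler_norml => /andP[].
    + by apply: le_trans htb _; move: bh; rewrite ler_norml => /andP[].
have phi0 : phi 0 = g p by rewrite /phi scale0r addr0.
have [h0|h0] := leP 0 h.
  have [|c] := key 0 h h0 _ (lexx _); first by rewrite normr0 normr_ge0.
  rewrite in_itv /= => /andP[c0 ch] E; exists c; split.
    by rewrite !ger0_norm // (le_trans c0 ch).
  by rewrite -phi0 -/(phi h) E subr0 mulrC.
have [|c] := key h 0 (ltW h0) (lexx _) _; first by rewrite normr0 normr_ge0.
rewrite in_itv /= => /andP[hc c0] E; exists c; split.
  by rewrite !ler0_norm ?(ltW h0) // lerN2.
rewrite -phi0 -/(phi h); have -> : phi h - phi 0 = - (phi 0 - phi h) by rewrite opprB.
by rewrite E /df; ring.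
Qed.
Lemma coord_le_norm (R : realType) (m : nat) (v : 'rV[R]_m) (k : 'I_m) : `|v 0 k| <= `|v|.
Proof.
rewrite [X in _ <= X]mx_normrE.
by apply: le_trans (le_bigmax _ _ (0, k)).
Qed.

Lemma norm_le_coord (R : realType) (m : nat) (v : 'rV[R]_m) (e : R) :
  0 <= e -> (forall k, `|v 0 k| <= e) -> `|v| <= e.
Proof.
move=> e0 H; rewrite [X in X <= _]mx_normrE; apply: bigmax_le => // [[i k]] _ /=.
by rewrite (ord1 i).
Qed.

Lemma norm_ei (R : realType) (m : nat) (k : 'I_m) : `|ei R k| = 1.
Proof.
apply/le_anti/andP; split.
  apply: norm_le_coord => // j; rewrite /ei mxE; case: (_ && _); rewrite ?normr1 ?normr0 //.
by apply: le_trans (coord_le_norm _ k); rewrite /ei mxE !eqxx normr1.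
Qed.

Lemma ei_entry (R : realType) (m : nat) (k j : 'I_m) : ei R k 0 j = (k == j)%:R.
Proof. by rewrite /ei mxE eqxx eq_sym. Qed.


Definition xpand (R : realType) (m : nat) (g : 'rV[R]_m -> R) (y : 'rV[R]_m) (c : 'I_m -> R) :=
  forall e : R, 0 < e -> exists2 d : R, 0 < d & forall v : 'rV[R]_m,
    `|v| < d -> `|g (y + v) - g y - \sum_k v 0 k * c k| <= e * `|v|.

Definition ppath (R : realType) (m : nat) (y v : 'rV[R]_m) (k : nat) : 'rV[R]_m :=
  y + \row_j (if (j < k)%N then v 0 j else 0).

Lemma ppath0 (R : realType) (m : nat) (y v : 'rV[R]_m) : ppath y v 0 = y.
Proof. by apply/rowP => j; rewrite /ppath !mxE addr0. Qed.

Lemma ppathm (R : realType) (m : nat) (y v : 'rV[R]_m) : ppath y v m = y + v.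
Proof. by apply/rowP => j; rewrite /ppath !mxE ltn_ord. Qed.

Lemma ppathS (R : realType) (m : nat) (y v : 'rV[R]_m) (k : 'I_m) :
  ppath y v k.+1 = ppath y v k + v 0 k *: ei R k.
Proof.
apply/rowP => j; rewrite /ppath !mxE eqxx /= -addrA; congr (_ + _).
rewrite ltnS leq_eqVlt; case: (eqVneq j k) => [->|jk] /=.
  by rewrite ltnn eqxx mulr1 add0r.
have -> : (nat_of_ord j == nat_of_ord k) = false by apply/negbTE; move: jk; apply: contra => /eqP/val_inj ->.
by rewrite /= mulr0 addr0.
Qed.


Lemma ppath_near (R : realType) (m : nat) (y v : 'rV[R]_m) (k : 'I_m) (t : R) :
  `|t| <= `|v 0 k| -> `|ppath y v k + t *: ei R k - y| <= `|v|.
Proof.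
move=> ht; apply: norm_le_coord => // j.
rewrite /ppath !mxE eqxx /= [X in `|X|](_ : _ = (if (j < k)%N then v 0 j else 0) + t * (j == k)%:R); last by ring.
case: (eqVneq j k) => [->|kj]; first by rewrite ltnn add0r mulr1 (le_trans ht) // coord_le_norm.
rewrite mulr0 addr0; case: ifP => _; by rewrite ?coord_le_norm ?normr0.
Qed.


Lemma partials_expand (R : realType) (m : nat) (g : 'rV[R]_m -> R) (y : 'rV[R]_m) (rho : R) :
  0 < rho -> (forall z, `|z - y| < rho -> forall k, derivable g z (ei R k)) ->
  (forall k, {for y, continuous (fun z => derive g z (ei R k))}) ->
  xpand g y (fun k => derive g y (ei R k)).
Proof.
move=> rho0 dg cg e e0.
pose e' := e / (m%:R + 1).
have e'0 : 0 < e' by rewrite divr_gt0 // ltr_pwDr // ler0n.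
have H : forall k, \forall z \near y, `|derive g y (ei R k) - derive g z (ei R k)| <= e'.
  by move=> k; move: (cg k) => /cvgrPdist_le /(_ e' e'0).
have := @filter_forall _ _ _ _ _ H.
move=> HH; have [d0 /= d0pos Hd] := (nbhs_ballP _ _).1 (HH _).
exists (Num.min d0 rho); first by rewrite lt_min d0pos rho0.
move=> v; rewrite lt_min => /andP[vd0 vrho].
have tel : g (y + v) - g y = \sum_(k < m) (g (ppath y v k.+1) - g (ppath y v k)).
  rewrite -(big_mkord xpredT (fun k => g (ppath y v k.+1) - g (ppath y v k))).
  by rewrite telescope_sumr // ppath0 ppathm.
rewrite tel -sumrB; apply: le_trans (ler_norm_sum _ _ _) _.
apply: (@le_trans _ _ (\sum_(k < m) e' * `|v|)).
  apply: ler_sum => k _.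
  have [t [ht ->]] : exists t, `|t| <= `|v 0 k| /\ g (ppath y v k.+1) - g (ppath y v k)
      = v 0 k * derive g (ppath y v k + t *: ei R k) (ei R k).
    rewrite ppathS; apply: mvt_line => t ht; apply: dg.
    by apply: le_lt_trans (ppath_near _ ht) vrho.
  rewrite -mulrBr normrM mulrC; apply: ler_pM => //.
    rewrite -normrN opprB; apply: Hd.
    rewrite -ball_normE /= -normrN opprB.
    by apply: le_lt_trans (ppath_near _ ht) vd0.
  exact: coord_le_norm.
rewrite sumr_const card_ord -mulr_natr mulrC mulrA.
apply: ler_wpM2r => //.
have m1 : 0 < m%:R + 1 :> R by rewrite ltr_wpDl // ler0n.
rewrite /e' mulrA ler_pdivrMr // mulrC ler_pM2l // lerDl //.
Qed.


Definition linc (R : realType) (m : nat) (c : 'I_m -> R) (v : 'rV[R]_m) : R := \sum_k v 0 k * c k.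

Lemma linc_linear (R : realType) (m : nat) (c : 'I_m -> R) : linear (linc c).
Proof.
move=> a u v; rewrite /linc -[RHS]/(a * _ + _) mulr_sumr -big_split /=; apply: eq_bigr => k _.
by rewrite !mxE mulrDl mulrA.
Qed.

HB.instance Definition _ (R : realType) (m : nat) (c : 'I_m -> R) :=
  GRing.isLinear.Build R 'rV[R]_m R *:%R (linc c) (linc_linear c).


Lemma linc_lip (R : realType) (m : nat) (c : 'I_m -> R) (v w : 'rV[R]_m) :
  `|linc c v - linc c w| <= (\sum_k `|c k|) * `|v - w|.
Proof.
rewrite /linc -sumrB mulr_suml; apply: le_trans (ler_norm_sum _ _ _) _.
apply: ler_sum => k _; rewrite -mulrBl normrM mulrC ler_wpM2l //.
by have := coord_le_norm (v - w) k; rewrite !mxE.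
Qed.

Lemma linc_continuous (R : realType) (m : nat) (c : 'I_m -> R) : continuous (linc c).
Proof.
move=> x; apply/(@cvgrPdist_lt _ _ _ _ (nbhs_filter x)) => e e0.
have S0 : 0 < \sum_k `|c k| + 1 by rewrite ltr_wpDl // sumr_ge0.
apply/nbhs_ballP; exists (e / (\sum_k `|c k| + 1)); first by rewrite /= divr_gt0.
move=> t; rewrite -ball_normE /= => xt.
apply: le_lt_trans (linc_lip _ _ _) _.
apply: (@le_lt_trans _ _ ((\sum_k `|c k| + 1) * `|x - t|)).
  by apply: ler_wpM2r => //; rewrite lerDl.
by rewrite mulrC -ltr_pdivlMr.
Qed.

Lemma expand_near (R : realType) (m : nat) (g : 'rV[R]_m -> R) (y : 'rV[R]_m) (c : 'I_m -> R) :
  xpand g y c -> forall eps : R, 0 < eps ->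
  \forall h \near (0 : 'rV[R]_m), `|g (h + y) - (g y + linc c h)| <= eps * `|h|.
Proof.
move=> ex eps eps0; have [d d0 Hd] := ex eps eps0.
apply/nbhs_ballP; exists d => // h; rewrite -ball_normE /= sub0r normrN => hd.
by have := Hd h hd; rewrite /linc [h + y]addrC opprD addrA.
Qed.

Lemma expand_diff (R : realType) (m : nat) (g : 'rV[R]_m -> R) (y : 'rV[R]_m) (c : 'I_m -> R) :
  xpand g y c -> differentiable g y /\ ('d g y : 'rV[R]_m -> R) = linc c.
Proof.
move=> ex.
have E : ('d g y : 'rV[R]_m -> R) = linc c.
  apply: (@diff_unique R _ _ g (linc c) y (@linc_continuous R m c)).
  apply/eqaddoP => eps eps0; exact: expand_near ex eps eps0.
split => //; apply/diff_locallyP; rewrite E; split; first exact: (@linc_continuous R m c).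
apply/eqaddoP => eps eps0; exact: expand_near ex eps eps0.
Qed.

Lemma diff_sum (R : realType) (m : nat) (g : 'rV[R]_m -> R) (y v : 'rV[R]_m) :
  differentiable g y -> 'd g y v = \sum_k v 0 k * derive g y (ei R k).
Proof.
move=> dg; rewrite {1}(row_sum_delta v) linear_sum; apply: eq_bigr => k _.
by rewrite linearZ deriveE.
Qed.

Lemma diff_expand (R : realType) (m : nat) (g : 'rV[R]_m -> R) (y : 'rV[R]_m) :
  differentiable g y -> xpand g y (fun k => derive g y (ei R k)).
Proof.
move=> dg e e0; have := diff_locally dg => /eqaddoP /(_ e e0) H.
have [d d0 Hd] := (nbhs_ballP _ _).1 H.
exists d => // v vd; have := Hd v; rewrite -ball_normE /= sub0r normrN => /(_ vd).
by rewrite -diff_sum //; rewrite !fctE /= [v + y]addrC opprD addrA.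
Qed.


Lemma shift_fun (R : realType) (m : nat) (g : 'rV[R]_m -> R) (w z v : 'rV[R]_m) :
  (fun h : R => h^-1 *: (((fun z => g (z + w)) \o shift z) (h *: v) - g (z + w)))
  = (fun h : R => h^-1 *: ((g \o shift (z + w)) (h *: v) - g (z + w))).
Proof. by apply: funext => h /=; rewrite addrA. Qed.

Lemma shift_derivable (R : realType) (m : nat) (g : 'rV[R]_m -> R) (w z v : 'rV[R]_m) :
  derivable g (z + w) v -> derivable (fun z => g (z + w)) z v.
Proof. by rewrite /derivable shift_fun. Qed.

Lemma shift_derive (R : realType) (m : nat) (g : 'rV[R]_m -> R) (w z v : 'rV[R]_m) :
  derive (fun z => g (z + w)) z v = derive g (z + w) v.
Proof. by rewrite /derive shift_fun. Qed.

Lemma sum_ei (R : realType) (m : nat) (t : R) (b : 'I_m) (c : 'I_m -> R) :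
  \sum_k (t *: ei R b) 0 k * c k = t * c b.
Proof.
rewrite (bigD1 b) //= big1 => [|k kb]; first by rewrite addr0 mxE ei_entry eqxx mulr1.
by rewrite mxE ei_entry eq_sym (negbTE kb) mulr0 mul0r.
Qed.

Lemma young_side (R : realType) (m : nat) (g : 'rV[R]_m -> R) (x : 'rV[R]_m) (a b : 'I_m) (h e : R) (ca : 'I_m -> R) :
  0 < h -> 0 <= e ->
  (forall t, `|t| <= h -> derivable g (x + t *: ei R a) (ei R a) /\
                         derivable g (x + t *: ei R a + h *: ei R b) (ei R a)) ->
  (forall u, `|u| <= 2 * h ->
     `|derive g (x + u) (ei R a) - derive g x (ei R a) - \sum_k u 0 k * ca k| <= e * `|u|) ->
  `|g (x + h *: ei R a + h *: ei R b) - g (x + h *: ei R a) - g (x + h *: ei R b) + g x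
     - h ^+ 2 * ca b| <= 3 * e * h ^+ 2.
Proof.
move=> h0 e0 dg ex.
pose g1 := fun z => g (z + h *: ei R b).
pose g' := g1 - g.
have [t [ht E]] : exists t, `|t| <= `|h| /\ g' (x + h *: ei R a) - g' x =
    h * derive g' (x + t *: ei R a) (ei R a).
  apply: mvt_line => t; rewrite (ger0_norm (ltW h0)) => ht.
  have [d1 d2] := dg t ht.
  apply: derivableB; last exact: d1.
  by apply: shift_derivable; exact: d2.
rewrite (ger0_norm (ltW h0)) in ht.
have [d1 d2] := dg t ht.
have -> : g (x + h *: ei R a + h *: ei R b) - g (x + h *: ei R a) - g (x + h *: ei R b) + g x
    = g' (x + h *: ei R a) - g' x by rewrite /g' /g1 !fctE; ring.
rewrite E /g' deriveB; last exact: d1; last by apply: shift_derivable; exact: d2.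
rewrite /g1 shift_derive.
set u1 := t *: ei R a + h *: ei R b.
set u2 := t *: ei R a.
have -> : x + t *: ei R a + h *: ei R b = x + u1 by rewrite /u1 addrA.
have Hsum0 : \sum_k u1 0 k * ca k - \sum_k u2 0 k * ca k = h * ca b.
  rewrite -sumrB -(sum_ei h b ca); apply: eq_bigr => k _.
  by rewrite /u1 /u2 !mxE; ring.
have Hsum : \sum_k u1 0 k * ca k = h * ca b + \sum_k u2 0 k * ca k.
  by rewrite -Hsum0 subrK.
have nu1 : `|u1| <= 2 * h.
  apply: le_trans (ler_normD _ _) _; rewrite !normrZ !norm_ei !mulr1 (ger0_norm (ltW h0)).
  by rewrite mulr2n mulrDl mul1r lerD2r.
have nu2 : `|u2| <= h by rewrite /u2 normrZ norm_ei mulr1.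
have B1 := ex u1 nu1.
have B2 := ex u2 (le_trans nu2 (ler_peMl (ltW h0) (ler1n R 2))).
rewrite -/u2 in B2 *.
set D1 := derive g (x + u1) (ei R a) - derive g x (ei R a) - \sum_k u1 0 k * ca k in B1.
set D2 := derive g (x + u2) (ei R a) - derive g x (ei R a) - \sum_k u2 0 k * ca k in B2.
have -> : h * (derive g (x + u1) (ei R a) - derive g (x + u2) (ei R a)) - h ^+ 2 * ca b
    = h * (D1 - D2) by rewrite /D1 /D2 Hsum; ring.
rewrite normrM (ger0_norm (ltW h0)).
apply: le_trans (ler_wpM2l (ltW h0) (ler_normB _ _)) _.
apply: le_trans (ler_wpM2l (ltW h0) (lerD B1 B2)) _.
have : e * `|u1| + e * `|u2| <= e * (2 * h) + e * h.
  by apply: lerD; apply: ler_wpM2l.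
move=> H; apply: le_trans (ler_wpM2l (ltW h0) H) _.
rewrite le_eqVlt; apply/orP; left; apply/eqP; ring.
Qed.

Lemma young (R : realType) (m : nat) (g : 'rV[R]_m -> R) (x : 'rV[R]_m) (a b : 'I_m) (rho : R)
  (ca cb : 'I_m -> R) : 0 < rho ->
  (forall z, `|z - x| < rho -> derivable g z (ei R a) /\ derivable g z (ei R b)) ->
  xpand (fun z => derive g z (ei R a)) x ca ->
  xpand (fun z => derive g z (ei R b)) x cb ->
  ca b = cb a.
Proof.
move=> rho0 dg exa exb.
have key : forall e, 0 < e -> `|ca b - cb a| <= 6 * e.
  move=> e e0.
  have [da da0 Ha] := exa e e0.
  have [db db0 Hb] := exb e e0.
  have [h [h0 h2]] : exists h : R, 0 < h /\ 2 * h < Num.min (Num.min da db) rho.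
    have : 0 < Num.min (Num.min da db) rho by rewrite !lt_min da0 db0 rho0.
    move=> M0; exists (Num.min (Num.min da db) rho / 4); split; lra.
  move: h2; rewrite !lt_min => /andP[/andP[h2a h2b] h2r].
  have nrm : forall (c d : 'I_m) t, `|t| <= h -> `|t *: ei R c + h *: ei R d| <= 2 * h.
    move=> c d t ht; apply: le_trans (ler_normD _ _) _.
    rewrite !normrZ !norm_ei !mulr1 (ger0_norm (ltW h0)) mulr2n mulrDl mul1r.
    by rewrite lerD2r.
  have nrm1 : forall (c : 'I_m) t, `|t| <= h -> `|t *: ei R c| <= 2 * h.
    move=> c t ht; rewrite normrZ norm_ei mulr1; apply: le_trans ht _.
    by rewrite ler_peMl ?(ltW h0) // ler1n.
  have dgz : forall z, `|z| <= 2 * h -> derivable g (x + z) (ei R a) /\ derivable g (x + z) (ei R b).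
    by move=> z zh; apply: dg; rewrite addrC addKr (le_lt_trans zh).
  have S1 := @young_side R m g x a b h e ca h0 (ltW e0).
  have S2 := @young_side R m g x b a h e cb h0 (ltW e0).
  have {}S1 := S1 (fun t ht => conj (dgz _ (nrm1 a t ht)).1
      (eq_ind _ (fun z => derivable g z (ei R a)) (dgz _ (nrm a b t ht)).1 _ (addrA _ _ _)))
      (fun u hu => Ha u (le_lt_trans hu h2a)).
  have {}S2 := S2 (fun t ht => conj (dgz _ (nrm1 b t ht)).2
      (eq_ind _ (fun z => derivable g z (ei R b)) (dgz _ (nrm b a t ht)).2 _ (addrA _ _ _)))
      (fun u hu => Hb u (le_lt_trans hu h2b)).
  rewrite [x + h *: ei R b + h *: ei R a]addrAC in S2.
  set D := g (x + h *: ei R a + h *: ei R b) in S1 S2.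
  set A := g (x + h *: ei R a) in S1 S2.
  set B := g (x + h *: ei R b) in S1 S2.
  have hh : 0 < h ^+ 2 by rewrite exprn_gt0.
  rewrite -(ler_pM2l hh).
  have -> : h ^+ 2 * `|ca b - cb a| = `|h ^+ 2 * ca b - h ^+ 2 * cb a|.
    by rewrite -mulrBr normrM (ger0_norm (ltW hh)).
  have -> : h ^+ 2 * ca b - h ^+ 2 * cb a
      = (D - B - A + g x - h ^+ 2 * cb a) - (D - A - B + g x - h ^+ 2 * ca b) by ring.
  apply: le_trans (ler_normB _ _) _.
  apply: le_trans (lerD S2 S1) _.
  rewrite le_eqVlt; apply/orP; left; apply/eqP; ring.
have [d0|] := ltrP 0 `|ca b - cb a|; last first.
  by move=> H; apply/eqP; rewrite -subr_eq0 -normr_le0.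
have := key (`|ca b - cb a| / 12) (divr_gt0 d0 _).
move=> H; exfalso; move: H; lra.
Qed.


Lemma delta_rshift (R : realType) (n : nat) (k : 'I_n) :
  delta_mx 0 (rshift n k) = row_mx (0 : 'rV[R]_n) (ei R k).
Proof.
apply/rowP => j; rewrite !mxE; case: splitP => j' Ej; rewrite !mxE /=.
  have -> // : (j == rshift n k) = false.
  apply/eqP => /(congr1 val) /=; rewrite Ej => E; move: (ltn_ord j').
  by rewrite E ltnNge leq_addr.
have -> : j = rshift n j' by apply: val_inj.
by rewrite eq_rshift.
Qed.

Lemma delta_lshift (R : realType) (n : nat) (k : 'I_n) :
  delta_mx 0 (lshift n k) = row_mx (ei R k) (0 : 'rV[R]_n).
Proof.
apply/rowP => j; rewrite !mxE; case: splitP => j' Ej; rewrite !mxE /=.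
  have -> : j = lshift n j' by apply: val_inj.
  by rewrite eq_lshift eq_sym.
have -> // : (j == lshift n k) = false.
apply/eqP => /(congr1 val) /=; rewrite Ej => E; move: (ltn_ord k).
by rewrite -E ltnNge leq_addr.
Qed.

Lemma rfun (R : realType) (n : nat) (P : 'rV[R]_(n + n) -> R) (x y : 'rV[R]_n) (k : 'I_n) :
  (fun h : R => h^-1 *: (((fun y => P (row_mx x y)) \o shift y) (h *: ei R k) - P (row_mx x y)))
  = (fun h : R => h^-1 *: ((P \o shift (row_mx x y)) (h *: delta_mx 0 (rshift n k)) - P (row_mx x y))).
Proof.
apply: funext => h /=; congr (_ *: (P _ - _)).
by rewrite delta_rshift scale_row_mx add_row_mx scaler0 add0r.
Qed.

Lemma lfun (R : realType) (n : nat) (P : 'rV[R]_(n + n) -> R) (x y : 'rV[R]_n) (k : 'I_n) :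
  (fun h : R => h^-1 *: (((fun y => P (row_mx y x)) \o shift y) (h *: ei R k) - P (row_mx y x)))
  = (fun h : R => h^-1 *: ((P \o shift (row_mx y x)) (h *: delta_mx 0 (lshift n k)) - P (row_mx y x))).
Proof.
apply: funext => h /=; congr (_ *: (P _ - _)).
by rewrite delta_lshift scale_row_mx add_row_mx scaler0 add0r.
Qed.

Lemma rderive (R : realType) (n : nat) (P : 'rV[R]_(n + n) -> R) (x y : 'rV[R]_n) (k : 'I_n) :
  derive (fun y => P (row_mx x y)) y (ei R k) = derive P (row_mx x y) (delta_mx 0 (rshift n k)).
Proof. by rewrite /derive rfun. Qed.

Lemma rderivable (R : realType) (n : nat) (P : 'rV[R]_(n + n) -> R) (x y : 'rV[R]_n) (k : 'I_n) :
  derivable P (row_mx x y) (delta_mx 0 (rshift n k)) -> derivable (fun y => P (row_mx x y)) y (ei R k).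
Proof. by rewrite /derivable rfun. Qed.

Lemma lderive (R : realType) (n : nat) (P : 'rV[R]_(n + n) -> R) (x y : 'rV[R]_n) (k : 'I_n) :
  derive (fun y => P (row_mx y x)) y (ei R k) = derive P (row_mx y x) (delta_mx 0 (lshift n k)).
Proof. by rewrite /derive lfun. Qed.

Lemma lderivable (R : realType) (n : nat) (P : 'rV[R]_(n + n) -> R) (x y : 'rV[R]_n) (k : 'I_n) :
  derivable P (row_mx y x) (delta_mx 0 (lshift n k)) -> derivable (fun y => P (row_mx y x)) y (ei R k).
Proof. by rewrite /derivable lfun. Qed.

Lemma row_mx_cont_r (R : realType) (n : nat) (x : 'rV[R]_n) :
  continuous (fun y : 'rV[R]_n => row_mx x y : 'rV[R]_(n + n)).
Proof.
move=> u A /nbhs_ballP[e /= e0 eA].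
apply/nbhs_ballP; exists e => //= v [_ uv]; apply: eA; split => // i j.
by rewrite !mxE; case: splitP => j' _; first [exact: ballxx | exact: uv].
Qed.

Lemma row_mx_cont_l (R : realType) (n : nat) (x : 'rV[R]_n) :
  continuous (fun y : 'rV[R]_n => row_mx y x : 'rV[R]_(n + n)).
Proof.
move=> u A /nbhs_ballP[e /= e0 eA].
apply/nbhs_ballP; exists e => //= v [_ uv]; apply: eA; split => // i j.
by rewrite !mxE; case: splitP => j' _; first [exact: ballxx | exact: uv].
Qed.

Definition ipd (R : realType) (m : nat) (l : seq 'I_m) (f : 'rV[R]_m -> R) : 'rV[R]_m -> R :=
  foldr (fun k g => fun y => derive g y (delta_mx 0 k)) f l.

Lemma iter_r (R : realType) (n : nat) (P : 'rV[R]_(n + n) -> R) (x : 'rV[R]_n) (l : seq 'I_n) :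
  iter_pd l (fun y => P (row_mx x y)) = fun y => ipd (map (fun k => rshift n k) l) P (row_mx x y).
Proof.
elim: l => [|k l IH] //=; rewrite IH; apply: funext => y.
by rewrite /pd rderive.
Qed.

Lemma iter_l (R : realType) (n : nat) (P : 'rV[R]_(n + n) -> R) (x : 'rV[R]_n) (l : seq 'I_n) :
  iter_pd l (fun y => P (row_mx y x)) = fun y => ipd (map (fun k => lshift n k) l) P (row_mx y x).
Proof.
elim: l => [|k l IH] //=; rewrite IH; apply: funext => y.
by rewrite /pd lderive.
Qed.

Lemma smooth_E (R : realType) (n : nat) (U : set 'rV[R]_n) (eps : 'rV[R]_n -> 'rV[R]_n -> 'M[R]_n)
  (x : 'rV[R]_n) (i j : 'I_n) (l : seq 'I_n) (y : 'rV[R]_n) :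
  splitting U eps -> U x -> U y ->
  {for y, continuous (iter_pd l (fun y => eps x y i j))} /\
  forall k, derivable (iter_pd l (fun y => eps x y i j)) y (ei R k).
Proof.
move=> [sm _ _ _] Ux Uy.
pose P := fun z : 'rV[R]_(n + n) => eps (lsubmx z) (rsubmx z) i j.
have -> : (fun y => eps x y i j) = fun y => P (row_mx x y).
  by apply: funext => z; rewrite /P row_mxKl row_mxKr.
rewrite iter_r.
have [c d] := sm i j (map (fun k => rshift n k) l) (row_mx x y) (conj (eq_ind_r U Ux (row_mxKl x y)) (eq_ind_r U Uy (row_mxKr x y))).
split.
  have H := @continuous_comp _ _ _ (fun y => row_mx x y) _ y (@row_mx_cont_r R n x y) c; exact: H.
by move=> k; apply: rderivable; exact: d.
Qed.

Lemma smooth_F (R : realType) (n : nat) (U : set 'rV[R]_n) (eps : 'rV[R]_n -> 'rV[R]_n -> 'M[R]_n)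
  (x : 'rV[R]_n) (i j : 'I_n) (l : seq 'I_n) (y : 'rV[R]_n) :
  splitting U eps -> U x -> U y ->
  {for y, continuous (iter_pd l (fun y => eps y x i j))} /\
  forall k, derivable (iter_pd l (fun y => eps y x i j)) y (ei R k).
Proof.
move=> [sm _ _ _] Ux Uy.
pose P := fun z : 'rV[R]_(n + n) => eps (lsubmx z) (rsubmx z) i j.
have -> : (fun y => eps y x i j) = fun y => P (row_mx y x).
  by apply: funext => z; rewrite /P row_mxKl row_mxKr.
rewrite iter_l.
have [c d] := sm i j (map (fun k => lshift n k) l) (row_mx y x) (conj (eq_ind_r U Uy (row_mxKl y x)) (eq_ind_r U Ux (row_mxKr y x))).
split.
  have H := @continuous_comp _ _ _ (fun y => row_mx y x) _ y (@row_mx_cont_l R n x y) c; exact: H.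
by move=> k; apply: lderivable; exact: d.
Qed.


Lemma ballU (R : realType) (m : nat) (U : set 'rV[R]_m) (x : 'rV[R]_m) :
  open U -> U x -> exists2 r : R, 0 < r & forall z, `|z - x| < r -> U z.
Proof.
move=> oU Ux; have : nbhs x U by apply: open_nbhs_nbhs; split.
move=> /nbhs_ballP [r /= r0 H]; exists r => // z zx; apply: H.
by rewrite -ball_normE /= distrC.
Qed.

Lemma nearU (R : realType) (m : nat) (U : set 'rV[R]_m) (x : 'rV[R]_m) :
  open U -> U x -> \forall y \near x, U y.
Proof. by move=> oU Ux; apply: open_nbhs_nbhs; split. Qed.

Lemma xpand_near (R : realType) (m : nat) (f1 f2 : 'rV[R]_m -> R) (x : 'rV[R]_m) (c : 'I_m -> R) :
  (\forall y \near x, f1 y = f2 y) -> xpand f1 x c -> xpand f2 x c.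
Proof.
move=> /nbhs_ballP [r /= r0 H] ex e e0.
have [d d0 Hd] := ex e e0.
exists (Num.min d r); first by rewrite lt_min d0 r0.
move=> v; rewrite lt_min => /andP[vd vr].
have E1 : f1 (x + v) = f2 (x + v).
  by apply: H; rewrite -ball_normE /= opprD addrA subrr sub0r normrN.
have E2 : f1 x = f2 x by apply: H; exact: ballxx.
by rewrite -E1 -E2; apply: Hd.
Qed.

Definition crd (R : realType) (m : nat) (b : 'I_m) (v : 'rV[R]_m) : R := v 0 b.

Lemma crd_linear (R : realType) (m : nat) (b : 'I_m) : linear (@crd R m b).
Proof. by move=> a u v; rewrite /crd !mxE. Qed.

HB.instance Definition _ (R : realType) (m : nat) (b : 'I_m) :=
  GRing.isLinear.Build R 'rV[R]_m R *:%R (@crd R m b) (crd_linear b).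

Lemma crd_continuous (R : realType) (m : nat) (b : 'I_m) : continuous (@crd R m b).
Proof. exact: coord_continuous. Qed.

Lemma derive_coord (R : realType) (m : nat) (f : 'rV[R]_m -> 'rV[R]_m) (x v : 'rV[R]_m) (b : 'I_m) :
  differentiable f x -> derive (fun w => f w 0 b) x v = ('d f x v) 0 b.
Proof.
move=> df.
have -> : (fun w => f w 0 b) = (@crd R m b) \o f by [].
have dc : differentiable (@crd R m b) (f x).
  exact/linear_differentiable/crd_continuous.
rewrite deriveE; last exact: differentiable_comp.
rewrite diff_comp // diff_lin //; exact: crd_continuous.
Qed.

Lemma derivable_coord (R : realType) (m : nat) (f : 'rV[R]_m -> 'rV[R]_m) (x v : 'rV[R]_m) (b : 'I_m) :
  differentiable f x -> derivable (fun w => f w 0 b) x v.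
Proof.
move=> df.
have -> : (fun w => f w 0 b) = (@crd R m b) \o f by [].
apply: diff_derivable; apply: differentiable_comp => //.
exact/linear_differentiable/crd_continuous.
Qed.

Lemma sum_prod_fun (R : realType) (m n : nat) (G H : 'I_n -> 'rV[R]_m -> R) :
  (fun w => \sum_a G a w * H a w) = \sum_a (G a * H a).
Proof. by apply: funext => w; rewrite fct_sumE. Qed.

Lemma derivable_sum_prod (R : realType) (m n : nat) (G H : 'I_n -> 'rV[R]_m -> R) (x v : 'rV[R]_m) :
  (forall a, derivable (G a) x v) -> (forall a, derivable (H a) x v) ->
  derivable (fun w => \sum_a G a w * H a w) x v.
Proof.
move=> dG dH; rewrite sum_prod_fun; apply: derivable_sum => a.
exact: derivableM.
Qed.

Lemma derive_sum_prod (R : realType) (m n : nat) (G H : 'I_n -> 'rV[R]_m -> R) (x v : 'rV[R]_m) :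
  (forall a, derivable (G a) x v) -> (forall a, derivable (H a) x v) ->
  derive (fun w => \sum_a G a w * H a w) x v
  = \sum_a (G a x * derive (H a) x v + H a x * derive (G a) x v).
Proof.
move=> dG dH; rewrite sum_prod_fun derive_sum => [|a]; last exact: derivableM.
by apply: eq_bigr => a _; rewrite deriveM.
Qed.


Lemma cocyc (R : realType) (n : nat) (U : set 'rV[R]_n) (eps : 'rV[R]_n -> 'rV[R]_n -> 'M[R]_n)
  (x y w : 'rV[R]_n) (i j : 'I_n) :
  splitting U eps -> U x -> U y -> U w ->
  eps y w i j = \sum_a eps x w i a * eps y x a j.
Proof.
move=> [_ _ co _] Ux Uy Uw; rewrite -(co y x w Uy Ux Uw) mxE //.
Qed.

Lemma invc (R : realType) (n : nat) (U : set 'rV[R]_n) (eps : 'rV[R]_n -> 'rV[R]_n -> 'M[R]_n)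
  (x y : 'rV[R]_n) (i j : 'I_n) :
  splitting U eps -> U x -> U y ->
  \sum_a eps y x i a * eps x y a j = (i == j)%:R.
Proof.
move=> [_ _ co id] Ux Uy; have E := co x y x Ux Uy Ux; rewrite id // in E.
by have := congr1 (fun M : 'M[R]_n => M i j) E; rewrite !mxE.
Qed.

Lemma epsxx (R : realType) (n : nat) (U : set 'rV[R]_n) (eps : 'rV[R]_n -> 'rV[R]_n -> 'M[R]_n)
  (x : 'rV[R]_n) (i j : 'I_n) :
  splitting U eps -> U x -> eps x x i j = (i == j)%:R.
Proof. by move=> [_ _ _ id] Ux; rewrite id // mxE. Qed.

Lemma diffE (R : realType) (n : nat) (U : set 'rV[R]_n) (eps : 'rV[R]_n -> 'rV[R]_n -> 'M[R]_n)
  (x y : 'rV[R]_n) (i j : 'I_n) :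
  open U -> splitting U eps -> U x -> U y -> differentiable (fun w => eps x w i j) y.
Proof.
move=> oU sp Ux Uy; have [r r0 Hr] := ballU oU Uy.
apply: (expand_diff (partials_expand r0 _ _)).1.
  by move=> z zr k; exact: ((smooth_E i j [::] sp Ux (Hr z zr)).2 k).
by move=> k; exact: ((smooth_E i j [:: k] sp Ux Uy).1).
Qed.

Lemma diffF (R : realType) (n : nat) (U : set 'rV[R]_n) (eps : 'rV[R]_n -> 'rV[R]_n -> 'M[R]_n)
  (x y : 'rV[R]_n) (i j : 'I_n) :
  open U -> splitting U eps -> U x -> U y -> differentiable (fun w => eps w x i j) y.
Proof.
move=> oU sp Ux Uy; have [r r0 Hr] := ballU oU Uy.
apply: (expand_diff (partials_expand r0 _ _)).1.
  by move=> z zr k; exact: ((smooth_F i j [::] sp Ux (Hr z zr)).2 k).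
by move=> k; exact: ((smooth_F i j [:: k] sp Ux Uy).1).
Qed.

Lemma sum_dl (R : realType) (n : nat) (i : 'I_n) (X : 'I_n -> R) :
  \sum_a (i == a)%:R * X a = X i.
Proof.
rewrite (bigD1 i) //= eqxx mul1r big1 ?addr0 // => a ai.
by rewrite eq_sym (negbTE ai) mul0r.
Qed.

Lemma sum_dr (R : realType) (n : nat) (j : 'I_n) (X : 'I_n -> R) :
  \sum_a (a == j)%:R * X a = X j.
Proof. by rewrite -(sum_dl j); apply: eq_bigr => a _; rewrite eq_sym. Qed.

Lemma dFx (R : realType) (n : nat) (U : set 'rV[R]_n) (eps : 'rV[R]_n -> 'rV[R]_n -> 'M[R]_n)
  (x : 'rV[R]_n) (i j r : 'I_n) :
  open U -> splitting U eps -> U x ->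
  pd r (fun w => eps w x i j) x = - pd r (fun w => eps x w i j) x.
Proof.
move=> oU sp Ux.
have Hn : \forall y \near x, (fun y => \sum_a eps y x i a * eps x y a j) y = cst (i == j)%:R y.
  by apply: filterS (nearU oU Ux) => y Uy /=; rewrite (invc i j sp Ux Uy).
have := near_eq_derive (ei R r) Hn; rewrite derive_cst.
rewrite derive_sum_prod => [|a|a]; last first.
- exact: ((smooth_E a j [::] sp Ux Ux).2 r).
- exact: ((smooth_F i a [::] sp Ux Ux).2 r).
under eq_bigr => a _ do rewrite (epsxx i a sp Ux) (epsxx a j sp Ux).
rewrite big_split /= sum_dl sum_dr => H.
by apply/eqP; rewrite -addr_eq0 addrC; apply/eqP.
Qed.

Lemma Gam_form (R : realType) (n : nat) (U : set 'rV[R]_n) (eps : 'rV[R]_n -> 'rV[R]_n -> 'M[R]_n)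
  (x y : 'rV[R]_n) (i k j : 'I_n) :
  open U -> splitting U eps -> U x -> U y ->
  Gam eps i k j y = \sum_a pd k (fun w => eps x w i a) y * eps y x a j.
Proof.
move=> oU sp Ux Uy.
have Hn : \forall w \near y, (fun w => eps y w i j) w = (fun w => \sum_a eps x w i a * eps y x a j) w.
  by apply: filterS (nearU oU Uy) => w Uw /=; rewrite (cocyc i j sp Ux Uy Uw).
rewrite /Gam /pd (near_eq_derive (ei R k) Hn).
rewrite (@derive_sum_prod R n n (fun a w => eps x w i a) (fun a _ => eps y x a j)) => [|a|a].
- by apply: eq_bigr => a _; rewrite derive_cst mulr0 add0r mulrC.
- exact: ((smooth_E i a [::] sp Ux Uy).2 k).
- exact: derivable_cst.
Qed.

Lemma Gam_deriv (R : realType) (n : nat) (U : set 'rV[R]_n) (eps : 'rV[R]_n -> 'rV[R]_n -> 'M[R]_n)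
  (x : 'rV[R]_n) (i k j r : 'I_n) :
  open U -> splitting U eps -> U x ->
  derivable (Gam eps i k j) x (ei R r) /\
  pd r (Gam eps i k j) x = pd r (pd k (fun w => eps x w i j)) x
                           - \sum_a Gam eps i k a x * Gam eps a r j x.
Proof.
move=> oU sp Ux.
have Hn : \forall y \near x, (fun y => \sum_a pd k (fun w => eps x w i a) y * eps y x a j) y
                            = Gam eps i k j y.
  by apply: filterS (nearU oU Ux) => y Uy /=; rewrite (Gam_form i k j oU sp Ux Uy).
have dG : forall a, derivable (pd k (fun w => eps x w i a)) x (ei R r).
  by move=> a; exact: ((smooth_E i a [:: k] sp Ux Ux).2 r).
have dH : forall a, derivable (fun y => eps y x a j) x (ei R r).
  by move=> a; exact: ((smooth_F a j [::] sp Ux Ux).2 r).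
split.
  apply: (@near_eq_derivable R _ _ _ _ x (ei R r) Hn).
  exact: (@derivable_sum_prod R n n (fun a => pd k (fun w => eps x w i a)) (fun a y => eps y x a j)).
rewrite /pd -(near_eq_derive (ei R r) Hn).
rewrite (@derive_sum_prod R n n (fun a => pd k (fun w => eps x w i a)) (fun a y => eps y x a j)) //.
rewrite big_split /=.
have dF' : forall a, derive (fun y => eps y x a j) x (ei R r) = - derive (fun w => eps x w a j) x (ei R r).
  by move=> a; exact: (dFx a j r oU sp Ux).
under eq_bigr => a _ do rewrite dF'.
under [X in _ + X]eq_bigr => a _ do rewrite (epsxx a j sp Ux).
rewrite sum_dr addrC; congr (_ + _).
rewrite -sumrN; apply: eq_bigr => a _.
by rewrite /Gam /pd mulrN.
Qed.

Lemma xpandE (R : realType) (n : nat) (U : set 'rV[R]_n) (eps : 'rV[R]_n -> 'rV[R]_n -> 'M[R]_n)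
  (x : 'rV[R]_n) (i j r : 'I_n) :
  open U -> splitting U eps -> U x ->
  xpand (fun z => derive (fun w => eps x w i j) z (ei R r)) x
        (fun k => pd k (pd r (fun w => eps x w i j)) x).
Proof.
move=> oU sp Ux; have [rho rho0 Hr] := ballU oU Ux.
apply: (partials_expand rho0).
  by move=> z zr k; exact: ((smooth_E i j [:: r] sp Ux (Hr z zr)).2 k).
by move=> k; exact: ((smooth_E i j [:: k; r] sp Ux Ux).1).
Qed.

Lemma schwarzE (R : realType) (n : nat) (U : set 'rV[R]_n) (eps : 'rV[R]_n -> 'rV[R]_n -> 'M[R]_n)
  (x : 'rV[R]_n) (i j r s : 'I_n) :
  open U -> splitting U eps -> U x ->
  pd s (pd r (fun w => eps x w i j)) x = pd r (pd s (fun w => eps x w i j)) x.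
Proof.
move=> oU sp Ux; have [rho rho0 Hr] := ballU oU Ux.
apply: (@young R n (fun w => eps x w i j) x r s rho _ _ rho0 _ (xpandE i j r oU sp Ux) (xpandE i j s oU sp Ux)).
move=> z zr; split.
  exact: ((smooth_E i j [::] sp Ux (Hr z zr)).2 r).
exact: ((smooth_E i j [::] sp Ux (Hr z zr)).2 s).
Qed.

Definition Kf (R : realType) (n : nat) (eps : 'rV[R]_n -> 'rV[R]_n -> 'M[R]_n) (x : 'rV[R]_n)
  (i r j : 'I_n) (z : 'rV[R]_n) : R :=
  \sum_b eps x z b r * pd b (fun w => eps x w i j) z - \sum_a eps x z i a * Gam eps a r j x.

Lemma K_deriv (R : realType) (n : nat) (U : set 'rV[R]_n) (eps : 'rV[R]_n -> 'rV[R]_n -> 'M[R]_n)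
  (x : 'rV[R]_n) (i r j s : 'I_n) :
  open U -> splitting U eps -> U x ->
  derive (Kf eps x i r j) x (ei R s) = pd s (pd r (fun w => eps x w i j)) x
     + \sum_b Gam eps i b j x * Gam eps b s r x - \sum_a Gam eps i s a x * Gam eps a r j x.
Proof.
move=> oU sp Ux.
pose f1 := fun z => \sum_b eps x z b r * pd b (fun w => eps x w i j) z.
pose f2 := fun z => \sum_a eps x z i a * (fun _ => Gam eps a r j x) z.
have -> : Kf eps x i r j = f1 - f2 by apply: funext => z.
have d1 : derivable f1 x (ei R s).
  apply: (@derivable_sum_prod R n n (fun b z => eps x z b r) (fun b => pd b (fun w => eps x w i j))) => b.
    exact: ((smooth_E b r [::] sp Ux Ux).2 s).
  exact: ((smooth_E i j [:: b] sp Ux Ux).2 s).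
have d2 : derivable f2 x (ei R s).
  apply: (@derivable_sum_prod R n n (fun a z => eps x z i a) (fun a _ => Gam eps a r j x)) => a.
    exact: ((smooth_E i a [::] sp Ux Ux).2 s).
  exact: derivable_cst.
rewrite deriveB //.
rewrite /f1 (@derive_sum_prod R n n (fun b z => eps x z b r) (fun b => pd b (fun w => eps x w i j))) => [|b|b]; first last.
- exact: ((smooth_E i j [:: b] sp Ux Ux).2 s).
- exact: ((smooth_E b r [::] sp Ux Ux).2 s).
rewrite /f2 (@derive_sum_prod R n n (fun a z => eps x z i a) (fun a _ => Gam eps a r j x)) => [|a|a]; first last.
- exact: derivable_cst.
- exact: ((smooth_E i a [::] sp Ux Ux).2 s).
rewrite big_split /=.
under eq_bigr => b _ do rewrite (epsxx b r sp Ux).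
rewrite sum_dr; congr (_ + _ - _).
apply: eq_bigr => a _; rewrite derive_cst mulr0 add0r mulrC //.
Qed.


Lemma derive_compf (R : realType) (n : nat) (f : 'rV[R]_n -> 'rV[R]_n) (G : 'rV[R]_n -> R) (x v : 'rV[R]_n) :
  differentiable f x -> differentiable G (f x) ->
  derive (G \o f) x v = \sum_b derive (fun w => f w 0 b) x v * derive G (f x) (ei R b).
Proof.
move=> df dG; rewrite deriveE; last exact: differentiable_comp.
rewrite diff_comp // /= diff_sum //; apply: eq_bigr => b _.
by rewrite derive_coord.
Qed.

Lemma K_sym (R : realType) (n : nat) (U : set 'rV[R]_n) (eps : 'rV[R]_n -> 'rV[R]_n -> 'M[R]_n)
  (x z : 'rV[R]_n) (i r j : 'I_n) :
  open U -> splitting U eps -> local_lie_group U eps -> U x -> U z ->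
  Kf eps x i r j z = Kf eps x i j r z.
Proof.
move=> oU sp ll Ux Uz.
have [V [f [[oV Vx VU fx] [_ _ Hf Hpd]]]] := ll x z Ux Uz.
pose g := fun w => f w ord0 i.
pose h := fun (j : 'I_n) (w : 'rV[R]_n) => \sum_a eps x (f w) i a * eps w x a j.
have dfx : differentiable f x := (Hf x Vx).2.
have dEz : forall a, differentiable (fun y => eps x y i a) (f x).
  by move=> a; rewrite fx; exact: (diffE i a oU sp Ux Uz).
have hdiff : forall j, differentiable (h j) x.
  move=> k; have -> : h k = \sum_a (((fun y => eps x y i a) \o f) * (fun w => eps w x a k)).
    by apply: funext => w; rewrite /h fct_sumE.
  apply: differentiable_sum => a; apply: differentiableM.
    exact: differentiable_comp.
  exact: (diffF a k oU sp Ux Ux).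
have hnear : forall j, \forall w \near x, h j w = derive g w (ei R j).
  move=> k; have := nearU oV Vx; apply: filterS => w Vw.
  rewrite /h /g -/(pd k (fun w => f w ord0 i) w) Hpd //.
  by rewrite (cocyc i k sp Ux (VU w Vw) (Hf w Vw).1).
have hderiv : forall j r, derive (h j) x (ei R r) = Kf eps x i r j z.
  move=> k s.
  rewrite /h (@derive_sum_prod R n n (fun a w => eps x (f w) i a) (fun a w => eps w x a k)) => [|a|a]; first last.
  - exact: ((smooth_F a k [::] sp Ux Ux).2 s).
  - by apply: (@diff_derivable _ _ _ ((fun y => eps x y i a) \o f)); exact: differentiable_comp (dEz a).
  rewrite big_split /= addrC /Kf.
  under eq_bigr => a _ do rewrite (epsxx a k sp Ux).
  rewrite sum_dr; congr (_ + _).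
    rewrite -[(fun w => eps x (f w) i k)]/((fun y => eps x y i k) \o f).
    rewrite derive_compf //; apply: eq_bigr => b _.
    by rewrite -/(pd s (fun w => f w ord0 b) x) Hpd // fx.
  rewrite -sumrN; apply: eq_bigr => a _.
  rewrite -/(pd s (fun w => eps w x a k) x) (dFx a k s oU sp Ux) fx mulrN //.
have [rho rho0 Hr] := ballU oV Vx.
rewrite -hderiv -hderiv.
apply: (@young R n g x j r rho (fun k => derive (h j) x (ei R k)) (fun k => derive (h r) x (ei R k)) rho0).
- move=> w wr; split; apply: derivable_coord; exact: (Hf w (Hr w wr)).2.
- exact: (xpand_near (hnear j) (diff_expand (hdiff j))).
- exact: (xpand_near (hnear r) (diff_expand (hdiff r))).
Qed.


Lemma C_inst (R : realType) (n : nat) (U : set 'rV[R]_n) (eps : 'rV[R]_n -> 'rV[R]_n -> 'M[R]_n)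
  (x : 'rV[R]_n) (i s r j : 'I_n) :
  open U -> splitting U eps -> local_lie_group U eps -> U x ->
  pd s (pd r (fun w => eps x w i j)) x
     + \sum_b Gam eps i b j x * Gam eps b s r x - \sum_a Gam eps i s a x * Gam eps a r j x
  = pd s (pd j (fun w => eps x w i r)) x
     + \sum_b Gam eps i b r x * Gam eps b s j x - \sum_a Gam eps i s a x * Gam eps a j r x.
Proof.
move=> oU sp ll Ux.
rewrite -!(K_deriv _ _ _ _ oU sp Ux); apply: near_eq_derive.
by apply: filterS (nearU oU Ux) => z Uz; exact: (K_sym i r j oU sp ll Ux Uz).
Qed.

Lemma Tor_deriv (R : realType) (n : nat) (U : set 'rV[R]_n) (eps : 'rV[R]_n -> 'rV[R]_n -> 'M[R]_n)
  (x : 'rV[R]_n) (i k j r : 'I_n) :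
  open U -> splitting U eps -> U x ->
  pd r (Tor eps i k j) x = pd r (Gam eps i k j) x - pd r (Gam eps i j k) x.
Proof.
move=> oU sp Ux.
have -> : Tor eps i k j = Gam eps i k j - Gam eps i j k by apply: funext.
rewrite /pd deriveB //.
  exact: (Gam_deriv i k j r oU sp Ux).1.
exact: (Gam_deriv i j k r oU sp Ux).1.
Qed.

Lemma sumBsplit (R : realType) (n : nat) (c d e : 'I_n -> R) :
  \sum_a c a * (d a - e a) = \sum_a c a * d a - \sum_a c a * e a.
Proof. by rewrite -sumrB; apply: eq_bigr => a _; rewrite mulrBr. Qed.

Unset Implicit Arguments.

Theorem proposition10 (R : realType) (n : nat) (U : set 'rV[R]_n)
  (eps : 'rV[R]_n -> 'rV[R]_n -> 'M[R]_n) :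
  (2 <= n)%N -> open U -> splitting U eps -> local_lie_group U eps ->
  forall (x : 'rV[R]_n), U x ->
  forall i r k j : 'I_n, dhat eps (Tor eps) i r k j x = 0.
Proof.
move=> _ oU sp ll x Ux i r k j.
rewrite /dhat /dhat_r !(Tor_deriv _ _ _ _ oU sp Ux).
rewrite !(Gam_deriv _ _ _ _ oU sp Ux).2.
rewrite /Tor !sumBsplit.
have S1 := schwarzE i j r k oU sp Ux.
have S2 := schwarzE i r j k oU sp Ux.
have S3 := schwarzE i k r j oU sp Ux.
have S4 := schwarzE i j k r oU sp Ux.
have S5 := schwarzE i k j r oU sp Ux.
have S6 := schwarzE i r k j oU sp Ux.
have C1 := C_inst i r k j oU sp ll Ux.
have C2 := C_inst i k j r oU sp ll Ux.
have C3 := C_inst i j r k oU sp ll Ux.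
move: S1 S2 S3 S4 S5 S6 C1 C2 C3.
generalize (pd r (pd k (fun w => eps x w i j)) x) => A0.
generalize (pd r (pd j (fun w => eps x w i k)) x) => A1.
generalize (pd k (pd r (fun w => eps x w i j)) x) => A2.
generalize (pd k (pd j (fun w => eps x w i r)) x) => A3.
generalize (pd j (pd k (fun w => eps x w i r)) x) => A4.
generalize (pd j (pd r (fun w => eps x w i k)) x) => A5.
generalize (\sum_a Gam eps i k a x * Gam eps a r j x) => A6.
generalize (\sum_a Gam eps i j a x * Gam eps a r k x) => A7.
generalize (\sum_a Gam eps i r a x * Gam eps a k j x) => A8.
generalize (\sum_a Gam eps i j a x * Gam eps a k r x) => A9.
generalize (\sum_a Gam eps i k a x * Gam eps a j r x) => A10.
generalize (\sum_a Gam eps i r a x * Gam eps a j k x) => A11.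
generalize (\sum_a Gam eps i a r x * Gam eps a k j x) => A12.
generalize (\sum_a Gam eps i a r x * Gam eps a j k x) => A13.
generalize (\sum_a Gam eps i a k x * Gam eps a r j x) => A14.
generalize (\sum_a Gam eps i a k x * Gam eps a j r x) => A15.
generalize (\sum_a Gam eps i a j x * Gam eps a k r x) => A16.
generalize (\sum_a Gam eps i a j x * Gam eps a r k x) => A17.
lra.
Qed.
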